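(* Let $G$ be an innately transitive permutation group on a finite set $\Omega$ with plinth $M$, let $\omega\in\Omega$ and $\mathcal E\in\mathrm{CD}(G)$. Then $M_{(\mathcal E)}=M$, the Cartesian system $\mathcal K_\omega(\mathcal E)$ is invariant under conjugation by $G_\omega$, and the actions of $G_\omega$ on $\mathcal K_\omega(\mathcal E)$ (by conjugation) and on $\mathcal E$ are permutationally equivalent.
   Context: A permutation group is innately transitive if it has a transitive minimal normal subgroup, called a plinth. A Cartesian decomposition of $\Omega$ is a set $\mathcal E=\{\Gamma_1,\dots,\Gamma_\ell\}$, $\ell\ge 2$, of partitions of $\Omega$ with $|\gamma_1\cap\cdots\cap\gamma_\ell|=1$ for all $\gamma_i\in\Gamma_i$; $\mathrm{CD}(G)$ is the set of $G$-invariant ones; $M_{(\mathcal E)}$ is the subgroup of $M$ fixing each partition in $\mathcal E$. If $M_{(\mathcal E)}=M$ and $\omega\in\Omega$, then $\mathcal K_\omega(\mathcal E)=\{M_{\gamma_1},\dots,M_{\gamma_\ell}\}$ where $\gamma_i$ is the block of $\Gamma_i$ containing $\omega$ and $M_{\gamma_i}$ is its setwise stabiliser; this is a Cartesian system of $M$ with respect to $\omega$, meaning $\bigcap_i K_i=M_\omega$ and $K_i(\bigcap_{j\ne i}K_j)=M$ for all $i$. *)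

(* Defs.v *)
From mathcomp Require Import all_boot all_order all_fingroup all_solvable.
Set Implicit Arguments. Unset Strict Implicit. Unset Printing Implicit Defensive.
Local Open Scope group_scope.

Section Defs.
Variable T : finType.

Definition partact := (('P^*)^*)%act : action [set: {perm T}] {set {set T}}.

Definition cart_decomp (E : {set {set {set T}}}) : Prop :=
  [/\ (2 <= #|E|)%N,
      forall Gam, Gam \in E -> partition Gam [set: T] &
      forall f : {set {set T}} -> {set T},
        (forall Gam, Gam \in E -> f Gam \in Gam) ->
        #|\bigcap_(Gam in E) f Gam| = 1%N].

Definition CD (G : {group {perm T}}) (E : {set {set {set T}}}) : Prop :=
  cart_decomp E /\ [acts G, on E | partact].

Definition plinth (G M : {group {perm T}}) : Prop :=
  [/\ M <| G, minnormal M G & [transitive M, on [set: T] | 'P]].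

Definition Mfix (M : {group {perm T}}) (E : {set {set {set T}}}) : {set {perm T}} :=
  'C_M(E | partact).

Definition cart_system (M : {group {perm T}}) (E : {set {set {set T}}}) (w : T)
  : {set {set {perm T}}} :=
  [set 'C_M[pblock Gam w | 'P^*] | Gam in E].

End Defs.

(* Main.v *)
Require Import Defs.
From mathcomp Require Import all_boot all_order all_fingroup all_solvable.
From Stdlib Require Import Lia.
From mathcomp Require Import zify.
Local Open Scope group_scope.
Lemma sum_div_lt p : 1 < p -> forall m n, 0 < n ->
  \sum_(k < m) n %/ p ^ k.+1 < n.
Proof.
move=> p1; elim=> [|m IH] n n0; first by rewrite big_ord0.
rewrite big_ord_recl /=.
have E : \sum_(i < m) n %/ p ^ (bump 0 i).+1 = \sum_(i < m) (n %/ p) %/ p ^ i.+1.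
  by apply: eq_bigr => i _; rewrite /bump /= add1n expnS divnMA.
rewrite expn1 E.
have [z|pos] := posnP (n %/ p).
  rewrite z big1 ?addn0 // => i _; exact: div0n.
have := IH _ pos.
have : (n %/ p) * 2 <= n.
  apply: leq_trans (leq_divM n p); exact: leq_mul.
lia.
Qed.

Lemma no_pow_dvd_fact p s : prime p -> 0 < s -> ~~ (p ^ s %| s`!).
Proof.
move=> pp s0; rewrite pfactor_dvdn ?fact_gt0 // logn_fact // -ltnNge.
rewrite big_add1 /= big_mkord; apply: sum_div_lt => //; exact: prime_gt1.
Qed.

Lemma pblock_act_gen (T : finType) (Gam : {set {set T}}) (m : {perm T}) x :
  x \in cover Gam -> trivIset (partact T Gam m) ->
  pblock (partact T Gam m) (m x) = ('P^*)%act (pblock Gam x) m.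
Proof.
move=> xc tI; apply: def_pblock => //.
  by rewrite /partact /= /setact; apply: imset_f; apply: pblock_mem.
rewrite /= /setact; apply/imsetP; exists x => //.
by rewrite mem_pblock.
Qed.

Lemma pblock_partact (T : finType) (Gam : {set {set T}}) (m : {perm T}) x :
  partition Gam [set: T] -> partact T Gam m = Gam ->
  ('P^*)%act (pblock Gam x) m = pblock Gam (m x).
Proof.
move=> pG fix_m; have := pG; move=> /and3P[/eqP cov tI _].
have := @pblock_act_gen T Gam m x; rewrite fix_m => -> //.
by rewrite cov inE.
Qed.

Lemma card_cd (T : finType) (E : {set {set {set T}}}) :
  [/\ (2 <= #|E|)%N,
      forall Gam, Gam \in E -> partition Gam [set: T] &
      forall f : {set {set T}} -> {set T},
        (forall Gam, Gam \in E -> f Gam \in Gam) ->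
        #|\bigcap_(Gam in E) f Gam| = 1%N] ->
  #|T| = (\prod_(Gam in E) #|Gam|)%N.
Proof.
case=> _ Ep Ef.
pose h (x : T) : {ffun {set {set T}} -> {set T}} :=
  [ffun Gam => if Gam \in E then pblock Gam x else set0].
have hE Gam x : Gam \in E -> h x Gam \in Gam.
  move=> GE; rewrite ffunE GE; apply: pblock_mem.
  by rewrite (cover_partition (Ep _ GE)) inE.
have hx x : x \in \bigcap_(Gam in E) h x Gam.
  apply/bigcapP => Gam GE; rewrite ffunE GE mem_pblock.
  by rewrite (cover_partition (Ep _ GE)) inE.
have hinj : injective h.
  move=> x y hxy; have := Ef (h x) (fun G GE => hE G x GE).
  move/eqP/cards1P=> [z Hz].
  have := hx x; have := hx y; rewrite -hxy Hz !inE => /eqP -> /eqP -> //.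
have -> : (\prod_(Gam in E) #|Gam|)%N = #|pfamily set0 E (fun Gam : {set {set T}} => Gam)|.
  by rewrite card_pfamily foldrE big_map big_enum.
rewrite -cardsT -(card_imset _ hinj); apply: eq_card => f.
apply/imsetP/pfamilyP => [[x _ ->]|[sup fam]].
  split; last by move=> G GE; exact: hE.
  apply/supportP => G GE; by rewrite ffunE (negPf GE).
have := Ef f fam; move/eqP/cards1P=> [z Hz].
exists z => //; apply/ffunP => G; rewrite ffunE.
case: ifP => GE; last by move/supportP: sup => ->; rewrite ?GE.
have zf : z \in f G by have := set11 z; rewrite -Hz => /bigcapP; apply.
by apply/esym/def_pblock => //; [case/and3P: (Ep _ GE)| apply: fam].
Qed.

Lemma part1 (T : finType) (G M : {group {perm T}}) (w : T)
  (E : {set {set {set T}}}) 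
  (cd : [/\ (2 <= #|E|)%N,
      forall Gam, Gam \in E -> partition Gam [set: T] &
      forall f : {set {set T}} -> {set T},
        (forall Gam, Gam \in E -> f Gam \in Gam) ->
        #|\bigcap_(Gam in E) f Gam| = 1%N])
  (aGE : [acts G, on E | partact T])
  (nMG : M <| G) (minM : minnormal M G) (trM : [transitive M, on [set: T] | 'P])
  (cardT : #|T| = (\prod_(Gam in E) #|Gam|)%N)
  (nofact : forall p s, prime p -> 0 < s -> ~~ (p ^ s %| s`!)) :
  M \subset 'C(E | partact T).
Proof.
have [sMG nMG'] := andP nMG.
have Ep : (forall Gam, Gam \in E -> partition Gam [set: T]) by case: cd.
apply/subsetP => m Mm; apply/astabP => Gam GE.
apply/eqP; apply/negPn/negP => Hm.
pose Eo := orbit (partact T) G Gam.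
have EoE : Eo \subset E.
  apply/subsetP => _ /orbitP[g Gg <-]; by rewrite (acts_act aGE).
have aGEo : [acts G, on Eo | partact T] by apply: acts_orbit; exact: subsetT.
pose N := 'C_M(Eo | partact T).
have GamEo : Gam \in Eo by apply: orbit_refl.
have N1 : N = 1.
  case/mingroupP: minM => _ minH.
  apply/eqP; apply/negPn/negP => N1.
  have NM : N :=: M.
    apply: minH; last exact: subsetIl.
    rewrite N1 /=; apply: normsI => //; apply: subset_trans aGEo (astab_norm _ _).
  have : m \in N by rewrite NM.
  case/setIP => _ /astabP /(_ _ GamEo) H; by rewrite H eqxx in Hm.
pose n := #|Gam|.
have cardEo : forall G', G' \in Eo -> #|G'| = n.
  by move=> _ /orbitP[g Gg <-]; rewrite /partact /= card_setact.
have d1 : (n ^ #|Eo| %| #|T|)%N.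
  rewrite cardT (big_setID Eo) /= (setIidPr EoE).
  apply: dvdn_mulr; rewrite (eq_bigr (fun _ => n)); last by move=> i; exact: cardEo.
  by rewrite prod_nat_const.
have d2 : (#|T| %| #|M|)%N.
  rewrite -(card_orbit_stab 'P M w) (atransP trM _ (in_setT w)) cardsT.
  exact: dvdn_mulr.
have d3 : (#|M| %| #|Eo|`!)%N.
  have nRA : [acts M, on Eo | partact T] by apply: subset_trans sMG aGEo.
  pose f := actperm <[nRA]>.
  have injf : 'injm f.
    rewrite ker_actperm astab_actby setIT -/N N1; exact: subxx.
  rewrite -(card_injm injf (subxx _)).
rewrite -(perm.card_Sym Eo); apply: cardSg.
  apply/subsetP => _ /morphimP[a _ aM ->]; rewrite inE; apply/subsetP => x.
  rewrite inE actpermE /= /actby aM andbT; case: (x \in Eo) => //.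
  by rewrite eqxx.
have n2 : (1 < n)%N.
  have covG : cover Gam = [set: T] by apply: cover_partition; exact: Ep.
  have n0 : (0 < n)%N.
    apply/card_gt0P; exists (pblock Gam w); apply: pblock_mem; by rewrite covG inE.
  rewrite ltn_neqAle n0 andbT; apply/negP => /eqP n1.
  have /cards1P[B GB] : #|Gam| == 1%N by rewrite -/n -n1.
  have BT : B = [set: T] by rewrite -covG GB /cover big_set1.
  move/negP: Hm; apply; rewrite GB BT /partact /= /setact imset_set1; apply/eqP; congr [set _].
  apply/setP => y; rewrite inE; apply/imsetP; exists ((m^-1)%g y); rewrite ?inE //.
  by rewrite /= apermE permKV.
have pp := pdiv_prime n2.
have s0 : (0 < #|Eo|)%N by apply/card_gt0P; exists Gam.
apply: (negP (nofact _ _ pp s0)).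
apply: dvdn_trans (dvdn_exp2r _ (pdiv_dvd n)) _.
by apply: dvdn_trans d1 (dvdn_trans d2 d3).
Qed.

Theorem lemma2p3 (T : finType) (G M : {group {perm T}}) (w : T)
  (E : {set {set {set T}}}) :
  plinth G M -> CD G E ->
  [/\ Mfix M E = M,
      (forall g K, g \in 'C_G[w | 'P] -> K \in cart_system M E w ->
         K :^ g \in cart_system M E w) &
      exists2 phi : {set {set T}} -> {set {perm T}},
        {in E &, injective phi} /\ phi @: E = cart_system M E w &
        forall g Gam, g \in 'C_G[w | 'P] -> Gam \in E ->
          phi (partact T Gam g) = phi Gam :^ g].
Proof.
move=> [nMG minM trM] [cd aGE].
have [sMG nMG'] := andP nMG.
have Ep : forall Gam, Gam \in E -> partition Gam [set: T] by case: cd.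
have sMC := @part1 T G M w E cd aGE nMG minM trM (@card_cd T E cd) (@no_pow_dvd_fact).
have fixM : forall m Gam, m \in M -> Gam \in E -> partact T Gam m = Gam.
  by move=> m Gam Mm GE; move/subsetP: sMC => /(_ m Mm) /astabP; apply.
have equiv : forall g Gam, g \in 'C_G[w | 'P] -> Gam \in E ->
    'C_M[pblock (partact T Gam g) w | 'P^*] = 'C_M[pblock Gam w | 'P^*] :^ g.
  move=> g Gam /setIP[Gg /astab1P gw] GE.
  have gw' : g w = w by rewrite -{2}gw.
  have tI : trivIset (partact T Gam g).
    have GgE : partact T Gam g \in E by rewrite (acts_act aGE Gg).
    by case/and3P: (Ep _ GgE).
  have := @pblock_act_gen T Gam g w; rewrite gw' => ->; last first.
    - exact: tI.
    - by rewrite (cover_partition (Ep _ GE)) inE.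
  rewrite conjIg (normP (subsetP nMG' g Gg)); congr (_ :&: _).
  by rewrite astab1_act.
have inv : forall m Gam y, m \in M -> Gam \in E -> ('P%act w m = y) ->
    (m \in 'C[pblock Gam w | 'P^*]) = (y \in pblock Gam w).
  move=> m Gam y Mm GE <-; have pG := Ep _ GE.
  have cv : w \in cover Gam by rewrite (cover_partition pG) inE.
  apply/astab1P/idP => [H|H].
    by rewrite -H /= /setact; apply: imset_f; rewrite mem_pblock.
  rewrite (@pblock_partact _ _ _ _ pG (fixM _ _ Mm GE)).
  apply: def_pblock => //; first by case/and3P: pG.
  by apply: pblock_mem.
have trans : forall y, exists2 m, m \in M & 'P%act w m = y.
  move=> y; have := atransP trM _ (in_setT w).
  by move/setP/(_ y); rewrite inE => /orbitP[m Mm <-]; exists m.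
have subb : forall G1 G2, G1 \in E -> G2 \in E ->
    'C_M[pblock G1 w | 'P^*] = 'C_M[pblock G2 w | 'P^*] ->
    pblock G1 w \subset pblock G2 w.
  move=> G1 G2 E1 E2 eq12; apply/subsetP => y y1.
  have [m Mm my] := trans y.
  have : m \in 'C_M[pblock G1 w | 'P^*] by rewrite inE Mm (inv _ _ _ Mm E1 my).
  by rewrite eq12 => /setIP[_]; rewrite (inv _ _ _ Mm E2 my).
have subG : forall G1 G2, G1 \in E -> G2 \in E ->
    pblock G1 w = pblock G2 w -> G1 \subset G2.
  move=> G1 G2 E1 E2 eq12; apply/subsetP => B BG1.
  have pG1 := Ep _ E1; have pG2 := Ep _ E2.
  have : B != set0 by apply: contraTneq BG1 => ->; case/and3P: pG1.
  case/set0Pn => x xB.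
  have [m Mm mx] := trans x.
  have -> : B = pblock G1 x by apply/esym/def_pblock => //; case/and3P: pG1.
  rewrite -mx /= -(@pblock_partact _ _ _ _ pG1 (fixM _ _ Mm E1)) eq12.
  rewrite (@pblock_partact _ _ _ _ pG2 (fixM _ _ Mm E2)); apply: pblock_mem.
  by rewrite (cover_partition pG2) inE.
split.
- by rewrite /Mfix; apply/setIidPl.
- move=> g K gC /imsetP[Gam GE ->]; apply/imsetP.
  have [Gg _] := setIP gC.
  by exists (partact T Gam g); [rewrite (acts_act aGE Gg) | rewrite equiv].
- exists (fun Gam => 'C_M[pblock Gam w | 'P^*]); last first.
    by move=> g Gam gC GE; rewrite equiv.
  split => // G1 G2 E1 E2 eq12; apply/eqP; rewrite eqEsubset.
  by rewrite !subG // ; apply/eqP; rewrite eqEsubset !subb.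
Qed.
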